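(* Let $\mathbf{k}$ be an algebraically closed field of prime characteristic $p$, and let $R(p)$ be the Radford algebra over $\mathbf{k}$. Then for every positive integer $n$, the $n$-th higher Frobenius–Schur indicator of $R(p)$ is \[ \nu_n(R(p))=\begin{cases} 1 & \text{if } n\not\equiv 0 \pmod p,\\ 0 & \text{if } n\equiv 0 \pmod p.\end{cases} \]
   Context: The Radford algebra $R(p)$ is the Hopf algebra over $\mathbf{k}$ generated as an algebra by $g,x$ subject to the relations $g^p=1$, $x^p=x$, $gx-xg=g^2-g$ if $p>2$, and $g^2=1$, $x^2=x$, $gx-xg=1-g$ if $p=2$; its coalgebra structure is given by $\Delta(g)=g\otimes g$, $\Delta(x)=x\otimes 1+g\otimes x$, $\varepsilon(g)=1$, $\varepsilon(x)=0$. It has dimension $p^2$ with basis $\{g^ix^j : 0\le i,j\le p-1\}$. For a finite-dimensional Hopf algebra $H$ with multiplication $m$, comultiplication $\Delta$, counit $\varepsilon$ and antipode $S$: let $\Delta^{(1)}=\mathrm{id}$, $\Delta^{(n)}=(\Delta^{(n-1)}\otimes\mathrm{id})\circ\Delta$ for $n\ge 2$, let $m^{(n)}(h_1\otimes\cdots\otimes h_n)=h_1\cdots h_n$, and define the Sweedler power maps $P_0(h)=\varepsilon(h)1_H$ and $P_n=m^{(n)}\circ\Delta^{(n)}$ for $n\ge1$. The $n$-th (higher Frobenius–Schur) indicator of $H$ is $\nu_n(H)=\mathrm{Tr}(S\circ P_{n-1})\in\mathbf{k}$, the trace of the linear map $S\circ P_{n-1}:H\to H$. *)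

(* Defs.v *)
(* Finite-dimensional Hopf algebra notions written in
   coordinates with respect to a fixed basis (no tensor products in MathComp). *)
From HB Require Import structures.
From mathcomp Require Import all_boot all_order all_algebra.
From mathcomp Require Import falgebra.
Set Implicit Arguments. Unset Strict Implicit. Unset Printing Implicit Defensive.
Import Order.TTheory GRing.Theory.
Local Open Scope ring_scope.

Section Coordinates.
Variables (k : fieldType) (H : falgType k) (B : finType) (b : B -> H).

Definition basisT : #|B|.-tuple H := [tuple b (enum_val i) | i < #|B|].
Definition crd (beta : B) (h : H) : k := coord basisT (enum_rank beta) h.

(* Elements of H (x) H are represented by their coefficient functions
   u : B -> B -> k, meaning  sum_{beta,gamma} u beta gamma  b beta (x) b gamma. *)
Definition pt2 (h1 h2 : H) : B -> B -> k := fun be ga => crd be h1 * crd ga h2.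
Definition tadd2 (u v : B -> B -> k) : B -> B -> k := fun be ga => u be ga + v be ga.
(* multiplication of H (x) H : (a (x) c)(a' (x) c') = a a' (x) c c' *)
Definition tmul2 (u v : B -> B -> k) : B -> B -> k := fun be ga =>
  \sum_(b1 : B) \sum_(c1 : B) \sum_(b2 : B) \sum_(c2 : B)
     u b1 c1 * v b2 c2 * crd be (b b1 * b b2) * crd ga (b c1 * b c2).
Definition tone2 : B -> B -> k := pt2 1 1.
Definition tpow2 (u : B -> B -> k) (m : nat) : B -> B -> k := iter m (tmul2 u) tone2.

(* Delta^{(n)} in coordinates, for a comultiplication Delta given in coordinates:
   DeltaN m h s = coefficient of  b s_1 (x) ... (x) b s_{m+1}  in Delta^{(m+1)}(h).
   Delta^{(1)} = id ;  Delta^{(n)} = (Delta^{(n-1)} (x) id) o Delta. *)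
Fixpoint DeltaN (Delta : H -> B -> B -> k) (m : nat) (h : H) (s : seq B) : k :=
  match m with
  | 0 => if s is [:: be] then crd be h else 0
  | m'.+1 =>
      match rev s with
      | l :: rs => \sum_(be : B) Delta h be l * DeltaN Delta m' (b be) (rev rs)
      | [::] => 0
      end
  end.

Definition prodB (s : seq B) : H := \prod_(be <- s) b be.

(* Sweedler power maps: P_0 = eps(.) 1,  P_n = m^{(n)} o Delta^{(n)} *)
Definition Pw (Delta : H -> B -> B -> k) (eps : H -> k) (n : nat) (h : H) : H :=
  match n with
  | 0 => eps h *: 1
  | m.+1 => \sum_(s : m.+1.-tuple B) DeltaN Delta m h s *: prodB s
  end.

(* nu_n = Tr (S o P_{n-1}), trace computed in the basis b *)
Definition indicator (Delta : H -> B -> B -> k) (eps : H -> k) (S : H -> H)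
    (n : nat) : k :=
  \sum_(be : B) crd be (S (Pw Delta eps n.-1 (b be))).

Definition is_antipode (Delta : H -> B -> B -> k) (eps : H -> k) (S : H -> H) :=
  (forall h, \sum_(be : B) \sum_(ga : B) Delta h be ga *: (S (b be) * b ga) = eps h *: 1)
  /\ (forall h, \sum_(be : B) \sum_(ga : B) Delta h be ga *: (b be * S (b ga)) = eps h *: 1).

End Coordinates.

Section Radford.
Variables (k : fieldType) (H : falgType k) (p : nat) (g x : H).

Definition radB (ij : 'I_p * 'I_p) : H := g ^+ ij.1 * x ^+ ij.2.

Definition radford_relations : Prop :=
  if p == 2%N then [/\ g ^+ 2 = 1, x ^+ 2 = x & g * x - x * g = 1 - g]
  else [/\ g ^+ p = 1, x ^+ p = x & g * x - x * g = g ^+ 2 - g].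

(* Delta is the algebra map with Delta g = g (x) g, Delta x = x (x) 1 + g (x) x,
   so Delta (g^i x^j) = (g (x) g)^i (x (x) 1 + g (x) x)^j; extended linearly. *)
Definition radDelta_basis (ij : 'I_p * 'I_p) : 'I_p * 'I_p -> 'I_p * 'I_p -> k :=
  tmul2 radB (tpow2 radB (pt2 radB g g) ij.1)
             (tpow2 radB (tadd2 (pt2 radB x 1) (pt2 radB g x)) ij.2).
Definition radDelta (h : H) : 'I_p * 'I_p -> 'I_p * 'I_p -> k := fun be ga =>
  \sum_(al : 'I_p * 'I_p) crd radB al h * radDelta_basis al be ga.

(* eps is the algebra map with eps g = 1, eps x = 0 *)
Definition radEps (h : H) : k :=
  \sum_(al : 'I_p * 'I_p) crd radB al h * ((1 : k) ^+ al.1 * (0 : k) ^+ al.2).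

End Radford.

Arguments radB {k H} p g x ij.
Arguments radford_relations {k H} p g x.
Arguments radDelta {k H} p g x h _ _.
Arguments radEps {k H} p g x h.

(* Main.v *)
Require Import Defs.
From HB Require Import structures.
From mathcomp Require Import all_boot all_order all_algebra.
From mathcomp Require Import falgebra.
From Stdlib Require Import FunctionalExtensionality.
From mathcomp Require Import ring zify.
Import GRing.Theory.
Local Open Scope ring_scope.

Set Implicit Arguments. Unset Strict Implicit. Unset Printing Implicit Defensive.
Section Gen.
Variables (k : fieldType) (H : falgType k) (B : finType) (b : B -> H).
Hypothesis bas : basis_of fullv (basisT b).

Lemma basisT_nth be : (basisT b)`_(enum_rank be) = b be.
Proof. by rewrite -tnth_nth tnth_mktuple enum_rankK. Qed.

Lemma crdD be h1 h2 : crd b be (h1 + h2) = crd b be h1 + crd b be h2.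
Proof. by rewrite /crd linearD. Qed.
Lemma crdZ be c h : crd b be (c *: h) = c * crd b be h.
Proof. by rewrite /crd linearZ. Qed.
Lemma crdN be h : crd b be (- h) = - crd b be h.
Proof. by rewrite /crd linearN. Qed.
Lemma crd0 be : crd b be 0 = 0.
Proof. by rewrite /crd linear0. Qed.
Lemma crd_sum be (I : Type) (r : seq I) (P : pred I) (F : I -> H) :
  crd b be (\sum_(i <- r | P i) F i) = \sum_(i <- r | P i) crd b be (F i).
Proof. by rewrite /crd linear_sum. Qed.

Lemma crd_basis be be' : crd b be (b be') = (be' == be)%:R.
Proof.
rewrite /crd -basisT_nth coord_free; last by case/andP: bas.
by rewrite (inj_eq enum_rank_inj).
Qed.

Lemma crd_expand h : h = \sum_(be : B) crd b be h *: b be.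
Proof.
have hs : h \in <<basisT b>>%VS by case/andP: bas => /eqP -> _; exact: memvf.
rewrite {1}(coord_span hs).
rewrite (reindex (@enum_rank B)) /=; last first.
  by exists enum_val => i _; [rewrite enum_rankK | rewrite enum_valK].
by apply: eq_bigr => be _; rewrite basisT_nth.
Qed.

Lemma crd_ext h1 h2 : (forall be, crd b be h1 = crd b be h2) -> h1 = h2.
Proof. by move=> e; rewrite (crd_expand h1) (crd_expand h2); apply: eq_bigr => be _; rewrite e. Qed.

Lemma crd_contr_r (y a : H) ga :
  \sum_(be : B) crd b be y * crd b ga (a * b be) = crd b ga (a * y).
Proof.
rewrite {2}(crd_expand y) mulr_sumr crd_sum; apply: eq_bigr => be _.
by rewrite -scalerAr crdZ.
Qed.
Lemma crd_contr_l (y a : H) ga :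
  \sum_(be : B) crd b be y * crd b ga (b be * a) = crd b ga (y * a).
Proof.
rewrite {2}(crd_expand y) mulr_suml crd_sum; apply: eq_bigr => be _.
by rewrite -scalerAl crdZ.
Qed.

Lemma tmul2_pt2l a c (v : B -> B -> k) be ga :
  tmul2 b (pt2 b a c) v be ga =
  \sum_(b2 : B) \sum_(c2 : B) v b2 c2 * crd b be (a * b b2) * crd b ga (c * b c2).
Proof.
rewrite /tmul2 /pt2.
transitivity (\sum_(b1 : B) \sum_(b2 : B) \sum_(c2 : B) \sum_(c1 : B)
   crd b b1 a * crd b c1 c * v b2 c2 * crd b be (b b1 * b b2) * crd b ga (b c1 * b c2)).
  apply: eq_bigr => b1 _; rewrite exchange_big; apply: eq_bigr => b2 _.
  by rewrite exchange_big.
rewrite exchange_big; apply: eq_bigr => b2 _.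
rewrite exchange_big; apply: eq_bigr => c2 _.
rewrite -(crd_contr_l a (b b2) be) mulr_sumr mulr_suml; apply: eq_bigr => b1 _.
rewrite -(crd_contr_l c (b c2) ga) !mulr_sumr; apply: eq_bigr => c1 _.
by ring.
Qed.

Lemma tmul2_pt2 a c a' c' : tmul2 b (pt2 b a c) (pt2 b a' c') = pt2 b (a * a') (c * c').
Proof.
apply: functional_extensionality => be; apply: functional_extensionality => ga; rewrite tmul2_pt2l /pt2.
rewrite -(crd_contr_r a' a be) mulr_suml; apply: eq_bigr => b2 _.
rewrite -(crd_contr_r c' c ga) !mulr_sumr; apply: eq_bigr => c2 _.
by ring.
Qed.

Lemma tmul2_assoc a c a' c' (R : B -> B -> k) :
  tmul2 b (pt2 b a c) (tmul2 b (pt2 b a' c') R) = tmul2 b (pt2 b (a * a') (c * c')) R.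
Proof.
apply: functional_extensionality => be; apply: functional_extensionality => ga; rewrite !tmul2_pt2l.
under eq_bigr => b2 _ do under eq_bigr => c2 _ do rewrite tmul2_pt2l !mulr_suml.
under eq_bigr => b2 _ do under eq_bigr => c2 _ do under eq_bigr => b3 _ do rewrite !mulr_suml.
under eq_bigr => b2 _ do rewrite exchange_big.
rewrite exchange_big; apply: eq_bigr => b3 _.
under eq_bigr => b2 _ do rewrite exchange_big.
rewrite exchange_big; apply: eq_bigr => c3 _.
rewrite -!mulrA -(crd_contr_r (a' * b b3) a be) -(crd_contr_r (c' * b c3) c ga).
rewrite mulr_suml mulr_sumr; apply: eq_bigr => b2 _.
rewrite !mulr_sumr; apply: eq_bigr => c2 _.
by ring.
Qed.

Lemma tmul2_addl u v R : tmul2 b (tadd2 u v) R = tadd2 (tmul2 b u R) (tmul2 b v R).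
Proof.
apply: functional_extensionality => be; apply: functional_extensionality => ga; rewrite /tmul2 /tadd2 -big_split /=.
apply: eq_bigr => ? _; rewrite -big_split; apply: eq_bigr => ? _.
rewrite -big_split; apply: eq_bigr => ? _; rewrite -big_split; apply: eq_bigr => ? _.
by rewrite !mulrDl.
Qed.


Lemma tmul2_addr u v R : tmul2 b R (tadd2 u v) = tadd2 (tmul2 b R u) (tmul2 b R v).
Proof.
apply: functional_extensionality => be; apply: functional_extensionality => ga; rewrite /tmul2 /tadd2 -big_split /=.
apply: eq_bigr => ? _; rewrite -big_split; apply: eq_bigr => ? _.
rewrite -big_split; apply: eq_bigr => ? _; rewrite -big_split; apply: eq_bigr => ? _.
by rewrite !mulrDr !mulrDl.
Qed.

Lemma sum_tuple_cons (V : nmodType) n (F : seq B -> V) :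
  \sum_(s : n.+1.-tuple B) F s = \sum_(l : B) \sum_(t : n.-tuple B) F (l :: t).
Proof.
rewrite pair_big /= (reindex (fun p : B * n.-tuple B => cons_tuple p.1 p.2)) //=.
exists (fun s : n.+1.-tuple B => (thead s, behead_tuple s)) => [[l t] _|s _] /=.
  by congr (_, _); apply: val_inj.
by rewrite [RHS]tuple_eta.
Qed.

Lemma sum_tuple_rev (V : nmodType) n (F : seq B -> V) :
  \sum_(s : n.-tuple B) F s = \sum_(s : n.-tuple B) F (rev s).
Proof.
rewrite (reindex_inj (h := @rev_tuple n B)) //.
by move=> s t /(congr1 val) /= /(congr1 rev); rewrite !revK => /val_inj.
Qed.

Lemma Pw1 D e h : Pw b D e 1 h = h.
Proof.
rewrite /Pw [RHS](crd_expand h) (sum_tuple_cons 0 (fun s => DeltaN b D 0 h s *: prodB b s)); apply: eq_bigr => l _.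
rewrite (big_pred1 [tuple]) => [|t]; last by apply/esym/eqP/val_inj; case: t => [[|? ?]].
by rewrite /= /prodB big_seq1.
Qed.

Lemma PwE D e m h : Pw b D e m.+1 h = \sum_(s : m.+1.-tuple B) DeltaN b D m h s *: prodB b s.
Proof. by []. Qed.

Lemma PwS D e m h : Pw b D e m.+2 h =
  \sum_(be : B) \sum_(l : B) D h be l *: (Pw b D e m.+1 (b be) * b l).
Proof.
rewrite PwE (sum_tuple_rev m.+2 (fun s => DeltaN b D m.+1 h s *: prodB b s)) (sum_tuple_cons m.+1 (fun s => DeltaN b D m.+1 h (rev s) *: prodB b (rev s))).
rewrite [RHS]exchange_big; apply: eq_bigr => l _.
under [RHS]eq_bigr => be _ do rewrite PwE mulr_suml scaler_sumr.
rewrite [RHS]exchange_big.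
symmetry; etransitivity; first exact: (sum_tuple_rev m.+1 (fun s => \sum_be D h be l *: (DeltaN b D m (b be) s *: prodB b s * b l))).
symmetry; apply: eq_bigr => t _.
rewrite rev_cons /= rev_rcons revK scaler_suml; apply: eq_bigr => be _.
by rewrite /prodB big_rcons /= -scalerAl scalerA.
Qed.

End Gen.

Unset Implicit Arguments.

Lemma zid1 (V : zmodType) (u v s t : V) : u - (v - (s - t)) + (t - s) = u - v.
Proof.
rewrite opprB -addrA [s - t - v]addrC -addrA.
by rewrite [s - t + _]addrA subrK subrr addr0.
Qed.

Lemma zid3 (V : zmodType) (a b c d : V) : (a - b) + (b - c) + (c - d) = a - d.
Proof. by rewrite !addrA !subrK. Qed.
Lemma zid2 (R : pzRingType) (h1 h2 y1 y2 X Z : R) :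
  h1 * h2 - y1 * y2 * (X * Z) = (h1 - y1 * X) * h2 + y1 * X * (h2 - y2 * Z) + y1 * (X * y2 - y2 * X) * Z.
Proof. by rewrite !mulrBl !mulrBr !mulrBl !mulrA zid3. Qed.

Section Rad.
Variables (k : fieldType) (H : falgType k) (p : nat) (g x : H).
Hypothesis p_gt1 : (1 < p)%N.
Hypothesis gp : g ^+ p = 1.
Hypothesis xp : x ^+ p = x.
Hypothesis gxc : g * x - x * g = g ^+ 2 - g.
Hypothesis bas : basis_of fullv (basisT (radB p g x)).

Notation b := (radB p g x).
Notation B := ('I_p * 'I_p)%type.

Lemma p_gt0 : (0 < p)%N. Proof. exact: ltnW. Qed.

Lemma gmod e : g ^+ (e %% p) = g ^+ e.
Proof. exact: expr_mod. Qed.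

Definition ordp (e : nat) : 'I_p := Ordinal (ltn_pmod e p_gt0).

Lemma b_gx e j (hj : (j < p)%N) : b (ordp e, Ordinal hj) = g ^+ e * x ^+ j.
Proof. by rewrite /radB /= gmod. Qed.

Lemma crd_gx_ne (be : B) e j : (j < p)%N -> (be.2 != j :> nat) -> crd b be (g ^+ e * x ^+ j) = 0.
Proof.
move=> hj hne; rewrite -(b_gx e j hj) crd_basis //.
case: eqP => // E; move: hne; rewrite -E /=; by rewrite eqxx.
Qed.

Lemma crd_gx_eq (i j : 'I_p) e : crd b (i, j) (g ^+ e * x ^+ j) = (i == (e %% p)%N :> nat)%:R.
Proof.
rewrite -(b_gx e j (ltn_ord j)) crd_basis //.
rewrite xpair_eqE -val_eqE /= eq_sym. have -> : Ordinal (ltn_ord j) = j by apply: val_inj. by rewrite eqxx andbT.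
Qed.

(* x-degree filtration:  Lo j h  <=> h has x-degree < j *)
Definition Lo (j : nat) (h : H) := forall be : B, (j <= be.2)%N -> crd b be h = 0.

Lemma Lo0 j : Lo j 0. Proof. by move=> be _; rewrite crd0. Qed.
Lemma LoD j h1 h2 : Lo j h1 -> Lo j h2 -> Lo j (h1 + h2).
Proof. by move=> a c be hb; rewrite crdD a // c // addr0. Qed.
Lemma LoZ j c h : Lo j h -> Lo j (c *: h).
Proof. by move=> a be hb; rewrite crdZ a // mulr0. Qed.
Lemma LoN j h : Lo j h -> Lo j (- h).
Proof. by move=> a be hb; rewrite crdN a // oppr0. Qed.
Lemma LoB j h1 h2 : Lo j h1 -> Lo j h2 -> Lo j (h1 - h2).
Proof. by move=> a c; apply: LoD => //; apply: LoN. Qed.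
Lemma Lo_sum j (I : Type) (r : seq I) (P : pred I) (F : I -> H) :
  (forall i, P i -> Lo j (F i)) -> Lo j (\sum_(i <- r | P i) F i).
Proof. by move=> hF; apply: big_ind => //; [exact: Lo0 | exact: LoD]. Qed.
Lemma Lo_mono j j' h : (j <= j')%N -> Lo j h -> Lo j' h.
Proof. by move=> jj a be hb; apply: a; apply: leq_trans hb. Qed.
Lemma Lo_zero h : Lo 0 h -> h = 0.
Proof. by move=> a; apply: (crd_ext bas) => be; rewrite a // crd0. Qed.

Lemma Lo_ind (P : H -> Prop) a :
  P 0 -> (forall h1 h2, P h1 -> P h2 -> P (h1 + h2)) -> (forall c h, P h -> P (c *: h)) ->
  (forall i j, (j < a)%N -> (j < p)%N -> P (g ^+ i * x ^+ j)) -> forall h, Lo a h -> P h.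
Proof.
move=> P0 PD PZ Pb h hL; rewrite (crd_expand bas h); apply: big_ind => // -[i j] _.
case: (ltnP j a) => hja.
  by apply: PZ; rewrite /radB /=; apply: Pb.
by rewrite hL // scale0r.
Qed.

Lemma Lo_gx e j a : (j < a)%N -> Lo a (g ^+ e * x ^+ j).
Proof.
elim: j {-2}j (leqnn j) e a => [|n IH] j hj e a hja.
  move: hj; rewrite leqn0 => /eqP Hj; subst j.
  move=> be hb; rewrite crd_gx_ne ?p_gt0 //; apply/eqP => E; move: hb; rewrite E; lia.
case: (ltnP j p) => hjp.
  move=> be hb; rewrite crd_gx_ne //; apply/eqP => E; move: hb; rewrite E; lia.
have -> : x ^+ j = x ^+ (j - p).+1.
  by rewrite -{1}(subnKC hjp) exprD xp -exprS.
apply: IH; last by apply: leq_trans hja; rewrite ltnS -subSn // leq_subLR; lia.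
by rewrite -subSn // leq_subLR; lia.
Qed.


Lemma Lo_g e a : (0 < a)%N -> Lo a (g ^+ e).
Proof. by move=> ha; have := @Lo_gx e 0 a ha; rewrite expr0 mulr1. Qed.

Lemma Lo_gl e a h : Lo a h -> Lo a (g ^+ e * h).
Proof.
move: h; apply: Lo_ind.
- by rewrite mulr0; apply: Lo0.
- by move=> h1 h2 a1 a2; rewrite mulrDr; apply: LoD.
- by move=> c h a1; rewrite -scalerAr; apply: LoZ.
by move=> i j hja hjp; rewrite mulrA -exprD; apply: Lo_gx.
Qed.

Lemma Lo_xr a h : Lo a h -> Lo a.+1 (h * x).
Proof.
move: h; apply: Lo_ind.
- by rewrite mul0r; apply: Lo0.
- by move=> h1 h2 a1 a2; rewrite mulrDl; apply: LoD.
- by move=> c h a1; rewrite -scalerAl; apply: LoZ.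
by move=> i j hja hjp; rewrite -mulrA -exprSr; apply: Lo_gx.
Qed.

Lemma Lo_xnr n a h : Lo a h -> Lo (a + n) (h * x ^+ n).
Proof.
elim: n h a => [|n IH] h a ha; first by rewrite addn0 expr0 mulr1.
by rewrite exprSr mulrA addnS; apply: Lo_xr; apply: IH.
Qed.

Lemma Lo1_gr h : Lo 1 h -> Lo 1 (h * g).
Proof.
move: h; apply: Lo_ind.
- by rewrite mul0r; apply: Lo0.
- by move=> h1 h2 a1 a2; rewrite mulrDl; apply: LoD.
- by move=> c h a1; rewrite -scalerAl; apply: LoZ.
move=> i j hja hjp; have -> : j = 0%N by lia.
by rewrite expr0 mulr1 -exprSr; apply: Lo_g.
Qed.

Lemma xg_comm i : Lo 1 (x * g ^+ i - g ^+ i * x).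
Proof.
elim: i => [|i IH]; first by rewrite expr0 mulr1 mul1r subrr; apply: Lo0.
have E : x * g = g * x - (g ^+ 2 - g).
  by rewrite -gxc opprB addrC subrK.
have -> : x * g ^+ i.+1 - g ^+ i.+1 * x =
   (x * g ^+ i - g ^+ i * x) * g + (g ^+ i.+1 - g ^+ (i.+2)).
  rewrite exprSr mulrA mulrBl -[g ^+ i * x * g]mulrA E.
  by rewrite !mulrBr !mulrA -!exprSr zid1.
by apply: LoD; [apply: Lo1_gr | apply: LoB; apply: Lo_g].
Qed.

Lemma Lo_xl a h : Lo a h -> Lo a.+1 (x * h).
Proof.
move: h; apply: Lo_ind.
- by rewrite mulr0; apply: Lo0.
- by move=> h1 h2 a1 a2; rewrite mulrDr; apply: LoD.
- by move=> c h a1; rewrite -scalerAr; apply: LoZ.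
move=> i j hja hjp.
have -> : x * (g ^+ i * x ^+ j) = (x * g ^+ i - g ^+ i * x) * x ^+ j + g ^+ i * x ^+ j.+1.
  by rewrite mulrBl !mulrA -[g ^+ i * x * x ^+ j]mulrA -exprS subrK.
apply: LoD; last by apply: Lo_gx.
by apply: (@Lo_mono (1 + j)); [lia | apply: Lo_xnr; apply: xg_comm].
Qed.

Lemma Lo_xnl n a h : Lo a h -> Lo (n + a) (x ^+ n * h).
Proof.
elim: n h a => [|n IH] h a ha; first by rewrite add0n expr0 mul1r.
by rewrite exprS -mulrA addSn; apply: Lo_xl; apply: IH.
Qed.

Lemma Lo_mul a c h1 h2 : Lo a.+1 h1 -> Lo c.+1 h2 -> Lo (a + c).+1 (h1 * h2).
Proof.
move=> h1L h2L; move: h1 h1L; apply: Lo_ind.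
- by rewrite mul0r; apply: Lo0.
- by move=> u v a1 a2; rewrite mulrDl; apply: LoD.
- by move=> c0 h a1; rewrite -scalerAl; apply: LoZ.
move=> i j hja hjp; rewrite -mulrA; apply: Lo_gl.
by apply: (@Lo_mono (j + c.+1)); [lia | apply: Lo_xnl].
Qed.

Lemma Lo_mulLD a c h1 h2 : Lo a h1 -> Lo c.+1 h2 -> Lo (a + c) (h1 * h2).
Proof.
case: a => [|a] h1L h2L; first by rewrite (Lo_zero _ h1L) mul0r; apply: Lo0.
by rewrite addSn; apply: Lo_mul.
Qed.

Lemma Lo_mulDL a c h1 h2 : Lo a.+1 h1 -> Lo c h2 -> Lo (a + c) (h1 * h2).
Proof.
case: c => [|c] h1L h2L; first by rewrite (Lo_zero _ h2L) mulr0; apply: Lo0.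
by rewrite addnS; apply: Lo_mul.
Qed.

Lemma xn_comm n y : Lo 1 y -> Lo n (x ^+ n * y - y * x ^+ n).
Proof.
move=> yL; move: y yL; apply: Lo_ind.
- by rewrite mulr0 mul0r subrr; apply: Lo0.
- by move=> u v a1 a2; rewrite mulrDr mulrDl opprD addrACA; apply: LoD.
- by move=> c0 h a1; rewrite -scalerAr -scalerAl -scalerBr; apply: LoZ.
move=> i j hj1 _; have -> : j = 0%N by lia.
rewrite expr0 mulr1; elim: n => [|n IH]; first by rewrite !expr0 mulr1 mul1r subrr; apply: Lo0.
have -> : x ^+ n.+1 * g ^+ i - g ^+ i * x ^+ n.+1 =
   x * (x ^+ n * g ^+ i - g ^+ i * x ^+ n) + (x * g ^+ i - g ^+ i * x) * x ^+ n.
  rewrite mulrBr mulrBl !mulrA -exprS addrA subrK.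
  by rewrite -!mulrA -exprS.
apply: LoD.
  by case: n IH => [|n] IH; [rewrite (Lo_zero _ IH) mulr0; apply: Lo0 | apply: Lo_xl].
by rewrite -add1n; apply: Lo_xnr; apply: xg_comm.
Qed.


Lemma Lo_xn n : Lo n.+1 (x ^+ n).
Proof. by have := @Lo_gx 0 n n.+1 (leqnn _); rewrite expr0 mul1r. Qed.

Definition hg (P : {poly k}) : H := horner_alg g P.

Lemma hgE P : hg P = \sum_(i < size P) P`_i *: g ^+ i.
Proof.
rewrite /hg -{1}(coefK P) poly_def linear_sum; apply: eq_bigr => i _.
by rewrite -mul_polyC rmorphM /= horner_algC rmorphXn /= horner_algX -scalerAl mul1r.
Qed.

Lemma hgM P Q : hg (P * Q) = hg P * hg Q. Proof. exact: rmorphM. Qed.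
Lemma hgD P Q : hg (P + Q) = hg P + hg Q. Proof. exact: rmorphD. Qed.
Lemma hgX n : hg ('X ^+ n) = g ^+ n. Proof. by rewrite /hg rmorphXn /= horner_algX. Qed.
Lemma hg1 : hg 1 = 1. Proof. exact: rmorph1. Qed.
Lemma hg0 : hg 0 = 0. Proof. exact: rmorph0. Qed.
Lemma hgN P : hg (- P) = - hg P. Proof. exact: rmorphN. Qed.
Lemma hgZ c P : hg (c *: P) = c *: hg P.
Proof. by rewrite -mul_polyC hgM /hg horner_algC -scalerAl mul1r. Qed.

Lemma Lo_hg P : Lo 1 (hg P).
Proof. by rewrite hgE; apply: Lo_sum => i _; apply: LoZ; apply: Lo_g. Qed.

Definition Sym (j : nat) (h : H) (P : {poly k}) := Lo j (h - hg P * x ^+ j).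

Lemma Sym_eq j h P P' : hg P = hg P' -> Sym j h P -> Sym j h P'.
Proof. by rewrite /Sym => ->. Qed.
Lemma Sym_heq j h h' P : h = h' -> Sym j h P -> Sym j h' P.
Proof. by move=> ->. Qed.
Lemma Sym_ieq j j' h P : j = j' -> Sym j h P -> Sym j' h P.
Proof. by move=> ->. Qed.
Lemma Sym0 j : Sym j 0 0.
Proof. by rewrite /Sym hg0 mul0r subr0; apply: Lo0. Qed.
Lemma SymD j h1 h2 P1 P2 : Sym j h1 P1 -> Sym j h2 P2 -> Sym j (h1 + h2) (P1 + P2).
Proof.
move=> a c; rewrite /Sym hgD mulrDl opprD addrACA; exact: LoD.
Qed.
Lemma SymZ j c h P : Sym j h P -> Sym j (c *: h) (c *: P).
Proof. by move=> a; rewrite /Sym hgZ -scalerAl -scalerBr; apply: LoZ. Qed.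
Lemma SymN j h P : Sym j h P -> Sym j (- h) (- P).
Proof. by move=> a; rewrite /Sym hgN mulNr opprK -[- h + _]opprK opprD opprK; apply: LoN. Qed.
Lemma Sym_sum j (I : Type) (r : seq I) (Pr : pred I) (F : I -> H) (G : I -> {poly k}) :
  (forall i, Pr i -> Sym j (F i) (G i)) -> Sym j (\sum_(i <- r | Pr i) F i) (\sum_(i <- r | Pr i) G i).
Proof. by move=> hF; apply: (big_ind2 (Sym j)) => //; [exact: Sym0 | move=> ? ? ? ? ? ?; exact: SymD]. Qed.

Lemma Sym_mul a c h1 h2 P1 P2 : Sym a h1 P1 -> Sym c h2 P2 -> Sym (a + c) (h1 * h2) (P1 * P2).
Proof.
move=> s1 s2; rewrite /Sym hgM exprD zid2.
have h2L : Lo c.+1 h2.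
  by rewrite -[h2](subrK (hg P2 * x ^+ c)); apply: LoD; [apply: Lo_mono s2 | apply: (@Lo_mul 0 c); [apply: Lo_hg | apply: Lo_xn]].
apply: LoD; first apply: LoD.
- exact: Lo_mulLD.
- apply: Lo_mulDL => //; apply: (@Lo_mul 0 a); [apply: Lo_hg | ].
  by apply: Lo_xn.
- apply: Lo_mulLD; last by apply: Lo_xn.
  by apply: (@Lo_mulDL 0 a); [apply: Lo_hg | apply: xn_comm; apply: Lo_hg].
Qed.

Lemma Sym_Lo j h P : Sym j h P -> Lo j.+1 h.
Proof.
move=> s; rewrite -[h](subrK (hg P * x ^+ j)); apply: LoD; first exact: Lo_mono s.
by apply: (@Lo_mul 0 j); [apply: Lo_hg | apply: Lo_xn].
Qed.

Lemma Sym_gx i j : Sym j (g ^+ i * x ^+ j) ('X ^+ i).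
Proof. by rewrite /Sym hgX subrr; apply: Lo0. Qed.

Lemma Sym_crd (i jj : 'I_p) h P : Sym jj h P -> crd b (i, jj) h = crd b (i, ordp 0) (hg P).
Proof.
move=> s; have := s (i, jj) (leqnn _); rewrite crdD crdN => /eqP; rewrite subr_eq0 => /eqP ->.
have : Lo 1 (hg P) by apply: Lo_hg.
move: (hg P); apply: Lo_ind.
- by rewrite mul0r !crd0.
- by move=> u v E1 E2; rewrite mulrDl !crdD E1 E2.
- by move=> c u E; rewrite -scalerAl !crdZ E.
move=> e j hj _; have -> : j = 0%N by lia.
rewrite expr0 mulr1 crd_gx_eq.
have := crd_gx_eq i (ordp 0) e; rewrite /= mod0n expr0 mulr1 => ->.
by [].
Qed.


Lemma Sym_conv j j' h P P' : Sym j h P -> j = j' -> P = P' -> Sym j' h P'.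
Proof. by move=> s <- <-. Qed.
Lemma Sym_x n : Sym n (x ^+ n) 1.
Proof. by have := Sym_gx 0 n; rewrite expr0 mul1r. Qed.
Lemma Sym_g i : Sym 0 (g ^+ i) ('X ^+ i).
Proof. by have := Sym_gx i 0; rewrite expr0 mulr1. Qed.
Lemma Sym_g1 : Sym 0 g 'X.
Proof. by have := Sym_g 1; rewrite !expr1. Qed.

Definition EF (F : H -> H) (u : B -> B -> k) : H :=
  \sum_(be : B) \sum_(l : B) u be l *: (F (b be) * b l).
Definition Xt := tadd2 (pt2 b x 1) (pt2 b g x).

Section Lin.
Variable F : H -> H.
Hypothesis Flin : forall c u v, F (c *: u + v) = c *: F u + F v.

Lemma F0 : F 0 = 0.
Proof. have E := Flin 1 0 0; rewrite scaler0 add0r scale1r in E; have := congr1 (fun t => t - F 0) E; by rewrite /= subrr addrK. Qed.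
Lemma FD u v : F (u + v) = F u + F v.
Proof. by have := Flin 1 u v; rewrite !scale1r. Qed.
Lemma FZ c u : F (c *: u) = c *: F u.
Proof. by have := Flin c u 0; rewrite !addr0 F0 addr0. Qed.
Lemma Fsum (I : Type) (r : seq I) (Pr : pred I) (G : I -> H) :
  F (\sum_(i <- r | Pr i) G i) = \sum_(i <- r | Pr i) F (G i).
Proof. exact: (big_morph F FD F0). Qed.

Lemma EF_pt2 a c : EF F (pt2 b a c) = F a * c.
Proof.
rewrite {2}(crd_expand bas a) {2}(crd_expand bas c) Fsum mulr_suml; apply: eq_bigr => be _.
rewrite FZ mulr_sumr; apply: eq_bigr => l _.
by rewrite /pt2 -scalerAl -scalerAr scalerA.
Qed.

Lemma EF_add u v : EF F (tadd2 u v) = EF F u + EF F v.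
Proof.
rewrite /EF -big_split; apply: eq_bigr => be _; rewrite -big_split; apply: eq_bigr => l _.
by rewrite /tadd2 scalerDl.
Qed.

Lemma EF_step a c R :
  EF F (tmul2 b (pt2 b a c) (tmul2 b Xt R)) =
  EF F (tmul2 b (pt2 b (a * x) (c * 1)) R) + EF F (tmul2 b (pt2 b (a * g) (c * x)) R).
Proof. by rewrite /Xt tmul2_addl tmul2_addr !tmul2_assoc // EF_add. Qed.

Lemma tpow2S u n : tpow2 b u n.+1 = tmul2 b u (tpow2 b u n).
Proof. by []. Qed.

Lemma EF_unroll j : forall a c,
  EF F (tmul2 b (pt2 b a c) (tpow2 b Xt j)) =
  F (a * x ^+ j) * c +
  \sum_(t < j) EF F (tmul2 b (pt2 b (a * x ^+ t * g) (c * x)) (tpow2 b Xt (j - t.+1))).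
Proof.
elim: j => [|j IH] a c.
  have -> : tpow2 b Xt 0 = pt2 b 1 1 by [].
  by rewrite big_ord0 addr0 tmul2_pt2 // !mulr1 EF_pt2.
rewrite tpow2S EF_step IH mulr1 big_ord_recl /= expr0 mulr1 subSS subn0 addrA -mulrA -exprS.
rewrite -!addrA; congr (_ + _); rewrite addrC; congr (_ + _); apply: eq_bigr => t _.
by rewrite /bump /= add1n subSS exprS !mulrA.
Qed.

Variables (q r : {poly k}) (Dd : nat).
Hypothesis hq : hg q ^+ p = 1.
Hypothesis FB : forall i j, (i < p)%N -> (j < Dd)%N -> Sym j (F (g ^+ i * x ^+ j)) (q ^+ i * r ^+ j).

Lemma FB' i j : (j < Dd)%N -> Sym j (F (g ^+ i * x ^+ j)) (q ^+ i * r ^+ j).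
Proof.
move=> hj; rewrite -gmod; apply: (Sym_eq _ _ _ _ _ (FB _ _ (ltn_pmod i p_gt0) hj)).
by rewrite !hgM /hg !rmorphXn -!/(hg _) expr_mod.
Qed.

Lemma derived d h P : (d < Dd)%N -> Sym d h P -> Sym d (F h) ((P \Po q) * r ^+ d).
Proof.
move=> hd s; rewrite -[h](subrK (hg P * x ^+ d)) FD -[_ * r ^+ d]add0r.
apply: SymD.
  rewrite /Sym hg0 mul0r subr0.
  move: s; rewrite /Sym; move: (h - hg P * x ^+ d); apply: Lo_ind.
  - by rewrite F0; apply: Lo0.
  - by move=> u v a1 a2; rewrite FD; apply: LoD.
  - by move=> c u a1; rewrite FZ; apply: LoZ.
  move=> i j hj _; apply: (Lo_mono j.+1); [lia | apply: Sym_Lo; apply: FB'; lia].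
rewrite hgE mulr_suml Fsum comp_polyE mulr_suml.
apply: Sym_sum => i _; rewrite -scalerAl FZ -scalerAl; apply: SymZ.
exact: FB'.
Qed.

Lemma claimC j : forall a c P P' d e, Sym d a P -> Sym e c P' -> (d + j < Dd)%N -> (d + e + j < p)%N ->
  Sym (d + e + j) (EF F (tmul2 b (pt2 b a c) (tpow2 b Xt j)))
      ((P \Po q) * r ^+ d * P' * (r + q) ^+ j).
Proof.
elim: j => [|j IH] a c P P' d e sa sc h1 h2.
  have -> : tpow2 b Xt 0 = pt2 b 1 1 by [].
  rewrite tmul2_pt2 // !mulr1 EF_pt2 addn0.
  apply: Sym_mul => //; apply: derived => //; by rewrite addn0 in h1.
rewrite tpow2S EF_step.
have s1 := IH (a * x) (c * 1) (P * 1) (P' * 1) (d + 1)%N (e + 0)%N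
   (Sym_mul _ _ _ _ _ _ sa (Sym_x 1)) (Sym_mul _ _ _ _ _ _ sc (Sym_x 0)).
have s2 := IH (a * g) (c * x) (P * 'X) (P' * 1) (d + 0)%N (e + 1)%N
   (Sym_mul _ _ _ _ _ _ sa Sym_g1) (Sym_mul _ _ _ _ _ _ sc (Sym_x 1)).
have := SymD _ _ _ _ _ (Sym_conv _ (d + e + j.+1)%N _ _ _ (s1 ltac:(lia) ltac:(lia)) ltac:(lia) erefl)
  (Sym_conv _ (d + e + j.+1)%N _ _ _ (s2 ltac:(lia) ltac:(lia)) ltac:(lia) erefl).
move/Sym_conv; apply=> //.
rewrite !mulr1 comp_polyM comp_polyX addn0 addn1 !exprS; ring.
Qed.

End Lin.

Notation Dl := (radDelta p g x).
Notation ep := (radEps p g x).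
Definition Q m h := Pw b Dl ep m.+1 h.

Lemma Dl_lin c u v be l : Dl (c *: u + v) be l = c * Dl u be l + Dl v be l.
Proof.
rewrite /radDelta mulr_sumr -big_split; apply: eq_bigr => al _.
by rewrite crdD crdZ mulrDl mulrA.
Qed.

Lemma Q_lin m c u v : Q m (c *: u + v) = c *: Q m u + Q m v.
Proof.
case: m => [|m]; first by rewrite /Q !Pw1.
rewrite /Q !PwS // scaler_sumr -big_split; apply: eq_bigr => be _.
rewrite scaler_sumr -big_split; apply: eq_bigr => l _.
by rewrite Dl_lin scalerDl scalerA.
Qed.

Lemma QS m h : Q m.+1 h = EF (Q m) (Dl h).
Proof. by rewrite /Q PwS. Qed.

Lemma Dl_b al : Dl (b al) = radDelta_basis g x al.
Proof.
apply: functional_extensionality => be; apply: functional_extensionality => l.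
rewrite /radDelta (bigD1 al) //= crd_basis // eqxx mul1r big1 ?addr0 // => al' ne.
by rewrite crd_basis // eq_sym (negbTE ne) mul0r.
Qed.

Lemma ep_b al : ep (b al) = 0 ^+ al.2.
Proof.
rewrite /radEps (bigD1 al) //= crd_basis // eqxx mul1r expr1n mul1r big1 ?addr0 // => al' ne.
by rewrite crd_basis // eq_sym (negbTE ne) mul0r.
Qed.

Lemma tpow_gg i : tpow2 b (pt2 b g g) i = pt2 b (g ^+ i) (g ^+ i).
Proof.
elim: i => [|i IH]; first by rewrite !expr0.
by rewrite tpow2S IH tmul2_pt2 // -!exprS.
Qed.

Lemma Dl_gx (i j : 'I_p) : Dl (g ^+ i * x ^+ j) = tmul2 b (pt2 b (g ^+ i) (g ^+ i)) (tpow2 b Xt j).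
Proof. by rewrite -[g ^+ i * x ^+ j]/(b (i, j)) Dl_b /radDelta_basis /= tpow_gg. Qed.

Definition Sp m : {poly k} := \sum_(t < m.+1) 'X ^+ t.

Lemma hgXp n : hg ('X ^+ n) ^+ p = 1.
Proof. by rewrite hgX -exprM mulnC exprM gp expr1n. Qed.

Lemma mainQ m : forall i j, (i < p)%N -> (j < p)%N ->
  Sym j (Q m (g ^+ i * x ^+ j)) (('X ^+ m.+1) ^+ i * Sp m ^+ j).
Proof.
elim: m => [|m IH] i j hi hj.
  rewrite /Q Pw1 // /Sp big_ord1 expr0 expr1n mulr1 expr1; exact: Sym_gx.
have := Dl_gx (Ordinal hi) (Ordinal hj); rewrite /= => E.
rewrite QS E.
have := claimC (Q m) (Q_lin m) ('X ^+ m.+1) (Sp m) p (hgXp _) IH j (g ^+ i) (g ^+ i) ('X ^+ i) ('X ^+ i) 0 0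
  (Sym_g i) (Sym_g i) hj hj.
move/Sym_conv; apply=> //.
have E1 : Sp m.+1 = Sp m + 'X ^+ m.+1 by rewrite /Sp big_ord_recr.
by rewrite expr0 mulr1 comp_Xn_poly E1 [in RHS]exprSr exprMn.
Qed.
Lemma gpi i : g ^+ i * g ^+ (p.-1 * i) = 1.
Proof.
rewrite -exprD -{1}(mul1n i) -mulnDl add1n prednK ?p_gt0 //.
by rewrite exprM gp expr1n.
Qed.

Lemma hgXpm : hg ('X ^+ p.-1) ^+ p = 1.
Proof. exact: hgXp. Qed.

Section Anti.
Variable S : {linear H -> H}.
Hypothesis hS : forall h, EF S (Dl h) = ep h *: 1.
Let qS : {poly k} := 'X ^+ p.-1.
Let rS : {poly k} := - 'X ^+ p.-1.

Lemma Slin c u v : S (c *: u + v) = c *: S u + S v.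
Proof. exact: linearP. Qed.

Lemma mainS j : (j < p)%N -> forall i, (i < p)%N -> Sym j (S (g ^+ i * x ^+ j)) (qS ^+ i * rS ^+ j).
Proof.
elim/ltn_ind: j => j IHj hj i hi.
have eq := hS (g ^+ i * x ^+ j).
rewrite (Dl_gx (Ordinal hi) (Ordinal hj)) /= (EF_unroll S Slin) in eq.
rewrite -[g ^+ i * x ^+ j]/(b (Ordinal hi, Ordinal hj)) ep_b /= in eq.
case: j IHj hj eq => [|j] IHj hj eq.
  rewrite big_ord0 addr0 expr0 scale1r in eq.
  have E1 : S (g ^+ i * x ^+ 0) = g ^+ (p.-1 * i).
    by rewrite -[LHS]mulr1 -(gpi i) mulrA eq mul1r.
  have E2 : hg (qS ^+ i * rS ^+ 0) * x ^+ 0 = g ^+ (p.-1 * i).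
    by rewrite !expr0 !mulr1 /qS /hg rmorphXn /= rmorphXn /= horner_algX -exprM mulnC.
  by rewrite /Sym E1 E2 subrr; apply: Lo0.
have FB : forall i' j', (i' < p)%N -> (j' < j.+1)%N -> Sym j' (S (g ^+ i' * x ^+ j')) (qS ^+ i' * rS ^+ j').
  by move=> i' j' hi' hj'; apply: IHj => //; lia.
have sc : Sym (0 + 1) (g ^+ i * x) ('X ^+ i * 1).
  by have := Sym_mul _ _ _ _ _ _ (Sym_g i) (Sym_x 1); rewrite expr1.
have hsum : Sym j.+1 (\sum_(t < j.+1) EF S (tmul2 b (pt2 b (g ^+ i * x ^+ t * g) (g ^+ i * x)) (tpow2 b Xt (j.+1 - t.+1))))
   (\sum_(t < j.+1) ((('X ^+ i * 1 * 'X) \Po qS) * rS ^+ (0 + t + 0) * ('X ^+ i * 1) * (rS + qS) ^+ (j.+1 - t.+1))).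
  apply: Sym_sum => t _; have ht := ltn_ord t.
  have sa := Sym_mul _ _ _ _ _ _ (Sym_mul _ _ _ _ _ _ (Sym_g i) (Sym_x t)) Sym_g1.
  have := claimC S Slin qS rS j.+1 hgXpm FB (j.+1 - t.+1) _ _ _ _ _ _ sa sc ltac:(lia) ltac:(lia).
  by move/Sym_conv; apply=> //; lia.
have eq2 : S (g ^+ i * x ^+ j.+1) * g ^+ i = - \sum_(t < j.+1) EF S (tmul2 b (pt2 b (g ^+ i * x ^+ t * g) (g ^+ i * x)) (tpow2 b Xt (j.+1 - t.+1))).
  by apply/eqP; rewrite -addr_eq0 eq expr0n /= scale0r.
have := Sym_mul _ _ _ _ _ _ (SymN _ _ _ hsum) (Sym_g (p.-1 * i)).
rewrite -eq2 -mulrA gpi mulr1 addn0; apply: Sym_eq.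
have ET : \sum_(t < j.+1) ((('X ^+ i * 1 * 'X) \Po qS) * rS ^+ (0 + t + 0) * ('X ^+ i * 1) * (rS + qS) ^+ (j.+1 - t.+1))
   = qS ^+ i.+1 * rS ^+ j * 'X ^+ i.
  rewrite big_ord_recr /= subnn expr0 mulr1 big1 ?add0r.
    by rewrite mulr1 -exprSr comp_Xn_poly add0n addn0.
  move=> t _; have ht := ltn_ord t; rewrite /rS /qS addNr expr0n /= subSS.
  have -> : (j - t == 0)%N = false by apply/negbTE; rewrite subn_eq0 -ltnNge.
  by rewrite mulr0.
rewrite ET.
have -> : - (qS ^+ i.+1 * rS ^+ j * 'X ^+ i) * 'X ^+ (p.-1 * i) = qS ^+ i * rS ^+ j.+1 * ('X ^+ i * 'X ^+ (p.-1 * i)).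
  rewrite /rS /qS !exprSr; set A := 'X ^+ p.-1; set B := 'X ^+ i; set C := 'X ^+ (p.-1 * i); ring.
by rewrite hgM [hg ('X ^+ i * _)]hgM !hgX gpi mulr1.
Qed.

End Anti.
Lemma crd_g (i : 'I_p) e : crd b (i, ordp 0) (g ^+ e) = (i == (e %% p)%N :> nat)%:R.
Proof. by have := crd_gx_eq i (ordp 0) e; rewrite /= mod0n expr0 mulr1. Qed.

Lemma crd_ghg (i : 'I_p) a W : crd b (i, ordp 0) (g ^+ a * hg W) =
  \sum_(kk < size W) W`_kk * (i == ((a + kk) %% p)%N :> nat)%:R.
Proof.
rewrite hgE mulr_sumr crd_sum; apply: eq_bigr => kk _.
by rewrite -scalerAr crdZ -exprD crd_g.
Qed.

Lemma count_eq (i : 'I_p) m kk :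
  (i == ((p.-1 * m.+1 * i + kk) %% p)%N :> nat) = ((m.+2 * i) %% p == kk %% p)%N.
Proof.
rewrite -{1}(modn_small (ltn_ord i)) -(eqn_modDr (m.+1 * i)).
have -> : (i + m.+1 * i = m.+2 * i)%N by rewrite -{1}(mul1n i) -mulnDl.
have -> : (p.-1 * m.+1 * i + kk + m.+1 * i = (m.+1 * i) * p + kk)%N.
  rewrite -mulnA; set z := (m.+1 * i)%N.
  by rewrite -[in RHS](prednK p_gt0) mulnS [(z * _)%N]mulnC; lia.
by rewrite modnMDl.
Qed.

Hypothesis pch : p \in [pchar k].

Lemma natr_modp e : (((e %% p)%N)%:R : k) = e%:R.
Proof. by rewrite {2}(divn_eq e p) natrD natrM (pcharf0 pch) mulr0 add0r. Qed.

Lemma natr_inj_p (i1 i2 : 'I_p) : (i1%:R : k) = i2%:R -> i1 = i2.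
Proof.
wlog le12 : i1 i2 / (i1 <= i2)%N.
  by move=> W E; case: (leqP i1 i2) => h; [exact: W | apply/esym; apply: W => //; exact: ltnW].
move=> E; apply: val_inj => /=; apply/eqP; rewrite eqn_leq le12 /=.
have : (p %| i2 - i1)%N by rewrite (dvdn_pcharf pch) natrB // E subrr.
move/dvdn_leq => hle; case: (posnP (i2 - i1)) => [/eqP|h]; first by rewrite subn_eq0.
by have := hle h; have := ltn_ord i2; lia.
Qed.

Lemma count_sum m kk :
  \sum_(i < p) (((m.+2 * i) %% p == kk %% p)%N%:R : k) = if (p %| m.+2)%N then 0 else (1 : k).
Proof.
case: ifP => hd.
  transitivity (\sum_(i < p) ((0 == kk %% p)%N%:R : k)).
    apply: eq_bigr => i _; congr (_%:R); congr (_ == _).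
    by apply/eqP; apply: dvdn_mulr.
  by rewrite sumr_const card_ord -[_ *+ p]mulr_natr (pcharf0 pch) mulr0.
pose h (i : 'I_p) : 'I_p := ordp (m.+2 * i).
have hinj : injective h.
  move=> i1 i2 /(congr1 (fun t : 'I_p => (t%:R : k))); rewrite /= !natr_modp !natrM => E.
  apply: natr_inj_p; apply: (mulfI _ E); by rewrite -(dvdn_pcharf pch) hd.
transitivity (\sum_(i < p) (((h i : nat) == ordp kk :> nat)%:R : k)); first by [].
etransitivity; first exact: (esym (reindex_inj (P := xpredT) (F := fun j : 'I_p => (((j : nat) == ordp kk :> nat)%:R : k)) hinj)).
rewrite (bigD1 (ordp kk)) //= eqxx big1 ?addr0 // => i ne.
by case: eqP => // E; case/eqP: ne; apply: val_inj.
Qed.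

Lemma geom_p m : ~~ (p %| m.+2)%N -> \sum_(j < p) (- (m.+1)%:R : k) ^+ j = 1.
Proof.
move=> hd; set a : k := - (m.+1)%:R.
have ha : a ^+ p = a by rewrite -(pFrobenius_autE pch) pFrobenius_autN pFrobenius_aut_nat.
have h1 : a - 1 != 0.
  by rewrite /a -opprD natr1 oppr_eq0 -(dvdn_pcharf pch).
apply: (mulfI h1); rewrite -subrX1 ha mulr1 //.
Qed.

Lemma coef_sum1 (W : {poly k}) : \sum_(kk < size W) W`_kk = W.[1].
Proof. by rewrite horner_coef; apply: eq_bigr => kk _; rewrite expr1n mulr1. Qed.

Lemma Sp1 m : (Sp m).[1] = (m.+1)%:R.
Proof.
rewrite /Sp horner_sum (eq_bigr (fun _ => 1)) => [|t _]; last by rewrite hornerXn expr1n.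
by rewrite sumr_const card_ord.
Qed.

Section Final.
Variable S : {linear H -> H}.
Hypothesis hS : forall h, EF S (Dl h) = ep h *: 1.

Lemma S1 : S 1 = 1.
Proof.
have := mainS S hS 0 p_gt0 0 p_gt0.
rewrite /Sym !expr0 !mulr1 hg1 => /Lo_zero /eqP; rewrite subr_eq0 => /eqP.
by [].
Qed.

Lemma one_b : 1 = b (ordp 0, ordp 0).
Proof. by rewrite /radB /= mod0n !expr0 mulr1. Qed.

Lemma indicator_val n : (0 < n)%N ->
  indicator b Dl ep S n = if (p %| n)%N then 0 else 1.
Proof.
case: n => [//|n] _; rewrite /indicator /=.
case: n => [|m].
  have -> : (p %| 1)%N = false by rewrite dvdn1; apply/negbTE; rewrite neq_ltn p_gt1 orbT.
  transitivity (\sum_(be : B) ep (b be) * crd b be 1).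
    by apply: eq_bigr => be _; rewrite linearZ /= S1 crdZ.
  rewrite (bigD1 (ordp 0, ordp 0)) //= big1 ?addr0.
    by rewrite ep_b /= mod0n expr0 mul1r {1}one_b crd_basis // eqxx.
  by move=> be ne; rewrite {1}one_b crd_basis // eq_sym (negbTE ne) mulr0.
set W := fun j : nat => ((Sp m ^+ j \Po 'X ^+ p.-1) * (- 'X ^+ p.-1) ^+ j).
have FB : forall i j, (i < p)%N -> (j < p)%N ->
    Sym j (S (g ^+ i * x ^+ j)) (('X ^+ p.-1) ^+ i * (- 'X ^+ p.-1) ^+ j).
  by move=> i j hi hj; apply: (mainS S hS j hj i hi).
have E1 : forall (i j : 'I_p), crd b (i, j) (S (Pw b Dl ep m.+1 (b (i, j)))) =
    \sum_(kk < size (W j)) (W j)`_kk * ((((m.+2 * i) %% p)%N == (kk %% p)%N)%:R).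
  move=> i j.
  have sQ := mainQ m i j (ltn_ord i) (ltn_ord j).
  have sS := derived S (Slin S) _ _ p hgXpm FB j _ _ (ltn_ord j) sQ.
  rewrite -[b (i, j)]/(g ^+ i * x ^+ j) -/(Q m _) (Sym_crd i j _ _ sS).
  rewrite comp_polyM -exprM comp_Xn_poly -exprM -mulrA hgM hgX crd_ghg.
  by apply: eq_bigr => kk _; rewrite mulnA count_eq.
transitivity (\sum_(be : B) (fun (i j : 'I_p) => crd b (i, j) (S (Pw b Dl ep m.+1 (b (i, j))))) be.1 be.2).
  by apply: eq_bigr => -[i j].
etransitivity; first exact: (esym (pair_bigA _ (fun (i j : 'I_p) => crd b (i, j) (S (Pw b Dl ep m.+1 (b (i, j))))))).
under eq_bigr => i _ do under eq_bigr => j _ do rewrite E1.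
rewrite exchange_big /=.
under eq_bigr => j _ do rewrite exchange_big /=.
under eq_bigr => j _ do under eq_bigr => kk _ do rewrite -mulr_sumr count_sum.
case: ifP => hd.
  by rewrite big1 // => j _; rewrite big1 // => kk _; rewrite mulr0.
under eq_bigr => j _ do under eq_bigr => kk _ do rewrite mulr1.
rewrite -(geom_p m (negbT hd)); apply: eq_bigr => j _.
rewrite coef_sum1 /W hornerM horner_exp horner_comp horner_exp hornerXn expr1n Sp1.
by rewrite hornerN hornerXn expr1n -exprMn mulrN1.
Qed.

End Final.
End Rad.

Theorem theorem3p3 (k : closedFieldType) (p : nat) (H : falgType k) (g x : H)
    (S : {linear H -> H}) :
  p \in [pchar k] ->
  radford_relations p g x ->
  basis_of fullv (basisT (radB p g x)) ->
  is_antipode (radB p g x) (radDelta p g x) (radEps p g x) S ->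
  forall n : nat, (0 < n)%N ->
    indicator (radB p g x) (radDelta p g x) (radEps p g x) S n
    = (if (p %| n)%N then 0 else 1).
Proof.
move=> pch rel bas [hS _] n hn.
have p_gt1 : (1 < p)%N by apply: prime_gt1; exact: pcharf_prime pch.
have [gp xp gxc] : [/\ g ^+ p = 1, x ^+ p = x & g * x - x * g = g ^+ 2 - g].
  move: rel; rewrite /radford_relations; case: eqP => [-> [g2 x2 c]|_ [] //].
  by split => //; rewrite g2.
exact: (indicator_val _ _ p g x p_gt1 gp xp gxc bas pch S hS n hn).
Qed.
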